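(* Let $k$ be a field with a fixed algebraic closure $\overline{k}$, and let $l/k$ be a finite extension inside $\overline{k}$ which is normal and simple (generated by a single element). Then for every integer $N$ there exists $n\ge N$ and a hypersurface $H\subseteq\mathbf{P}^n_k$ which is an $l$-normic form.
   Context: All finite extensions of $k$ are considered as subfields of the fixed algebraic closure $\overline{k}$. A hypersurface $H\subseteq\mathbf{P}^n_k$ is an $l$-normic form if for every finite extension $k'/k$ inside $\overline{k}$, one has $H(k')\ne\emptyset$ if and only if $l\subseteq k'$. *)

(* Defs.v *)
From HB Require Import structures.
From mathcomp Require Import all_boot all_order all_algebra.
From mathcomp Require Import mpoly.

Set Implicit Arguments.
Unset Strict Implicit.
Unset Printing Implicit Defensive.

Import GRing.Theory.
Local Open Scope ring_scope.

(* The base field k is [K]; its fixed algebraic closure kbar is [Kbar],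
   with the structure map [iota : K -> Kbar]. Intermediate fields are
   subsets of Kbar (given as predicates Kbar -> Prop). *)

Definition is_algebraic_over (K : fieldType) (Kbar : fieldType)
    (iota : {rmorphism K -> Kbar}) : Prop :=
  forall x : Kbar, exists p : {poly K}, p != 0 /\ root (map_poly iota p) x.

Definition is_subfield (Kbar : fieldType) (S : Kbar -> Prop) : Prop :=
  [/\ S 0, S 1,
      (forall x y, S x -> S y -> S (x - y)),
      (forall x y, S x -> S y -> S (x * y)) &
      (forall x, S x -> S x^-1)].

Definition is_ext (K Kbar : fieldType) (iota : {rmorphism K -> Kbar})
    (S : Kbar -> Prop) : Prop :=
  is_subfield S /\ (forall c : K, S (iota c)).

Definition is_finite_ext (K Kbar : fieldType) (iota : {rmorphism K -> Kbar})
    (S : Kbar -> Prop) : Prop :=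
  is_ext iota S /\
  exists s : seq Kbar, (forall x, x \in s -> S x) /\
    forall x, S x -> exists c : 'I_(size s) -> K,
      x = \sum_(i < size s) iota (c i) * s`_i.

Definition adjoin (K Kbar : fieldType) (iota : {rmorphism K -> Kbar})
    (a : Kbar) : Kbar -> Prop :=
  fun x => forall S : Kbar -> Prop, is_ext iota S -> S a -> S x.

Definition is_simple_ext (K Kbar : fieldType) (iota : {rmorphism K -> Kbar})
    (S : Kbar -> Prop) : Prop :=
  exists a : Kbar, forall x, S x <-> adjoin iota a x.

Definition is_normal_ext (K Kbar : fieldType) (iota : {rmorphism K -> Kbar})
    (S : Kbar -> Prop) : Prop :=
  forall p : {poly K}, irreducible_poly p ->
    (exists x, S x /\ root (map_poly iota p) x) ->
    forall y, root (map_poly iota p) y -> S y.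

(* A hypersurface in P^n_k, given by a nonzero homogeneous form of positive
   degree in the n+1 homogeneous coordinates x_0, ..., x_n. *)
Definition is_hypersurface (K : fieldType) (n : nat) (F : {mpoly K[n.+1]}) : Prop :=
  F != 0 /\ exists d : nat, (0 < d)%N /\ F \is d.-homog.

(* H(k') is nonempty: there is a k'-point of P^n, i.e. a nonzero tuple with
   coordinates in k', on which F vanishes. *)
Definition has_point_in (K Kbar : fieldType) (iota : {rmorphism K -> Kbar})
    (n : nat) (F : {mpoly K[n.+1]}) (S : Kbar -> Prop) : Prop :=
  exists x : 'I_n.+1 -> Kbar,
    (forall i, S (x i)) /\ (exists i, x i != 0) /\
    (map_mpoly iota F).@[x] = 0.

Definition is_normic_form (K Kbar : fieldType) (iota : {rmorphism K -> Kbar})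
    (l : Kbar -> Prop) (n : nat) (F : {mpoly K[n.+1]}) : Prop :=
  forall k' : Kbar -> Prop, is_finite_ext iota k' ->
    (has_point_in iota F k' <-> (forall y, l y -> k' y)).

(* Main.v *)
Require Import Defs.
From HB Require Import structures.
From mathcomp Require Import all_boot all_order all_algebra.
From mathcomp Require Import mpoly.
From Stdlib Require Import Classical.
From mathcomp Require Import ring.

Set Implicit Arguments.
Unset Strict Implicit.
Unset Printing Implicit Defensive.
Import GRing.Theory.
Local Open Scope ring_scope.

Section Alg.
Variables (K : fieldType) (Kbar : fieldType) (iota : {rmorphism K -> Kbar}).

Local Notation ev p x := ((map_poly iota p).[x]).

Lemma evM (p q : {poly K}) x : ev (p * q) x = ev p x * ev q x.
Proof. by rewrite rmorphM hornerM. Qed.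

Lemma minpoly_ex (a : Kbar) : forall n (q : {poly K}), (size q <= n)%N -> q != 0 ->
  root (map_poly iota q) a ->
  exists f : {poly K}, [/\ f != 0, root (map_poly iota f) a &
     forall r, root (map_poly iota r) a -> f %| r].
Proof.
elim=> [|n IH] q sq qn0 rq.
  by move: qn0; rewrite -size_poly_eq0; move: sq; rewrite leqn0 => ->.
case: (Classical_Prop.classic (exists r, root (map_poly iota r) a /\ ~~ (q %| r))) => [[r [rr nd]]|H].
  have r0 : r %% q != 0 by apply: contra nd => /eqP H; apply/modp_eq0P.
  apply: (IH (r %% q)) => //.
    by rewrite -ltnS (leq_trans _ sq) // ltn_modp.
  move: rr; rewrite /root {1}(divp_eq r q) rmorphD hornerD evM (eqP rq) mulr0 add0r; done.
exists q; split=> // r rr.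
by apply/negPn/negP => nd; apply: H; exists r.
Qed.


Lemma minpoly_irr (f : {poly K}) (a : Kbar) : f != 0 -> root (map_poly iota f) a ->
  (forall r, root (map_poly iota r) a -> f %| r) -> irreducible_poly f.
Proof.
move=> f0 rf fmin; split.
  rewrite ltnNge leq_eqVlt ltnS leqn0 size_poly_eq0 (negPf f0) orbF.
  apply/negP => /size_poly1P [c c0 fE]; move: rf.
  by rewrite fE map_polyC /root hornerC fmorph_eq0 (negPf c0).
move=> q sq qf.
have q0 : q != 0 by apply: contraNneq f0 => q0; move: qf; rewrite q0 dvd0p.
have fE := divpK qf.
have h0 : f %/ q != 0 by apply: contraNneq f0 => h0; rewrite -fE h0 mul0r.
move: rf; rewrite /root -{1}fE evM mulf_eq0 => /orP [hr|qr].
  have fh := fmin _ hr.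
  have := dvdp_leq h0 fh; rewrite -{1}fE size_mul //.
  move: sq; rewrite -size_poly_eq0 in q0; rewrite -size_poly_eq0 in h0.
  move: q0 h0; case: (size q) => [|[|s]] //=; case: (size (f %/ q)) => // t _ _ _.
  by rewrite addnS /= -[X in (_ <= X)%N]addn0 leq_add2l.
by rewrite /eqp qf fmin.
Qed.

Definition polyval (a : Kbar) x := exists q : {poly K}, x = ev q a.

Lemma polyval_ext (f : {poly K}) (a : Kbar) : irreducible_poly f -> root (map_poly iota f) a ->
  is_ext iota (polyval a) /\ polyval a a.
Proof.
move=> fi rf; split; last by exists 'X; rewrite map_polyX hornerX.
split; last by move=> c; exists c%:P; rewrite map_polyC hornerC.
split.
- by exists 0; rewrite rmorph0 horner0.
- by exists 1; rewrite rmorph1 hornerC.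
- by move=> x y [p ->] [q ->]; exists (p - q); rewrite rmorphB hornerD hornerN.
- by move=> x y [p ->] [q ->]; exists (p * q); rewrite evM.
move=> x [q ->].
have [q0|qn0] := eqVneq (ev q a) 0.
  by exists 0; rewrite q0 invr0 rmorph0 horner0.
have cop : coprimep f q.
  rewrite irreducible_poly_coprime //; apply: contra qn0 => /dvdpP [g ->].
  by rewrite evM (eqP rf) mulr0.
case/Bezout_coprimepP: cop => [[u v]] /= e.
have := eqp_size e; rewrite size_poly1 => /eqP/size_poly1P [c c0 cE].
exists (c^-1 *: v).
have : ev (u * f + v * q) a = iota c by rewrite cE map_polyC hornerC.
rewrite rmorphD hornerD !evM (eqP rf) mulr0 add0r => H.
have V0 : ev v a != 0.
  by apply: contraNneq c0 => V0; move: H; rewrite V0 mul0r => /esym/eqP; rewrite fmorph_eq0.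
rewrite map_polyZ hornerZ fmorphV -H invfM mulrAC mulVf // mul1r.
done.
Qed.


Section Closure.
Variable S : Kbar -> Prop.
Hypothesis HS : is_ext iota S.

Lemma S0 : S 0. Proof. by case: HS => -[]. Qed.
Lemma S1 : S 1. Proof. by case: HS => -[]. Qed.
Lemma SK c : S (iota c). Proof. by case: HS. Qed.
Lemma SB x y : S x -> S y -> S (x - y). Proof. by case: HS => -[] _ _ H _ _ _; apply: H. Qed.
Lemma SM x y : S x -> S y -> S (x * y). Proof. by case: HS => -[] _ _ _ H _ _; apply: H. Qed.
Lemma SV x : S x -> S x^-1. Proof. by case: HS => -[] _ _ _ _ H _; apply: H. Qed.
Lemma SD x y : S x -> S y -> S (x + y).
Proof. move=> Sx Sy; have Sn : S (- y) by rewrite -sub0r; apply: SB => //; apply: S0. by rewrite -[y]opprK; apply: SB. Qed.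
Lemma SX x n : S x -> S (x ^+ n).
Proof. by move=> Sx; elim: n => [|n IH]; [rewrite expr0; apply: S1 | rewrite exprS; apply: SM]. Qed.
Lemma Ssum (I : finType) (F : I -> Kbar) : (forall i, S (F i)) -> S (\sum_i F i).
Proof. by move=> H; apply: (big_ind S) => //; [apply: S0 | apply: SD]. Qed.

End Closure.

Lemma evmod (f q : {poly K}) a : root (map_poly iota f) a -> ev (q %% f) a = ev q a.
Proof.
move=> rf; rewrite [in RHS](divp_eq q f) rmorphD hornerD evM (eqP rf) mulr0 add0r //.
Qed.

Lemma conj_gen (f p : {poly K}) (a y : Kbar) :
  irreducible_poly f -> root (map_poly iota f) a -> root (map_poly iota f) y ->
  y = ev p a -> forall S, is_ext iota S -> S y -> S a.
Proof.
move=> fi rfa rfy yE S HS Sy.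
have f0 := irredp_neq0 fi.
pose d := (size f).-1.
have sf : size f = d.+1 by rewrite /d prednK // ltnW //; case: fi.
have sm : forall q : {poly K}, (size (q %% f)%R <= d)%N by move=> q; rewrite -ltnS -sf ltn_modp.
pose M : 'M[K]_d := \matrix_(j < d) poly_rV (p ^+ j %% f).
have key : forall w : 'rV[K]_d, ev (rVpoly (w *m M)) a = \sum_(j < d) iota (w 0 j) * y ^+ j.
  move=> w; rewrite mulmx_sum_row linear_sum rmorph_sum horner_sum; apply: eq_bigr => j _.
  rewrite rowK linearZ /= poly_rV_K // map_polyZ hornerZ evmod //.
  by rewrite rmorphXn horner_exp -yE.
have Qdef : forall w : 'rV[K]_d, rVpoly w = \sum_(j < d) w 0 j *: 'X^j.
  move=> w0; rewrite {1}(row_sum_delta w0) linear_sum; apply: eq_bigr => j _; by rewrite linearZ /= rVpoly_delta.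
have inj : forall w : 'rV[K]_d, w *m M = 0 -> w = 0.
  move=> w wM.
  have e0 : \sum_(j < d) iota (w 0 j) * y ^+ j = 0 by rewrite -key wM linear0 rmorph0 horner0.
  have eQ : ev (rVpoly w) y = 0.
    rewrite Qdef rmorph_sum horner_sum -[RHS]e0; apply: eq_bigr => j _.
    by rewrite -mul_polyC rmorphM /= map_polyC hornerM hornerC rmorphXn /= map_polyX hornerXn.
  have fQ : f %| rVpoly w.
    apply/negPn/negP => nd.
    have cop : coprimep f (rVpoly w) by rewrite irreducible_poly_coprime.
    rewrite -(coprimep_map iota) in cop.
    by move: (coprimep_root cop rfy); rewrite eQ eqxx.
  have Q0 : rVpoly w = 0.
    apply/eqP/negPn/negP => Qn0.
    have := dvdp_leq Qn0 fQ; rewrite sf ltnNge.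
    by rewrite (size_poly _ _).
  by rewrite -[w]rVpolyK Q0 linear0.
have Mu : M \in unitmx by rewrite -row_free_unit; apply: inj_row_free.
pose t : 'rV[K]_d := poly_rV ('X %% f).
pose w := t *m invmx M.
have wM : w *m M = t by rewrite /w mulmxKV.
have aE : a = \sum_(j < d) iota (w 0 j) * y ^+ j.
  by rewrite -key wM /t poly_rV_K // evmod // map_polyX hornerX.
rewrite aE; apply: Ssum => // j; apply: SM => //; [apply: SK | apply: SX] => //.
Qed.

End Alg.

Section Forms.
Variables (K : fieldType) (Kbar : fieldType) (iota : {rmorphism K -> Kbar}).
Variables (f : {poly K}) (n : nat).
Hypothesis f0 : f != 0.
Hypothesis f1 : (1 < size f)%N.

Let d := (size f).-1.

Definition fh (A B : {mpoly K[n.+1]}) : {mpoly K[n.+1]} :=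
  \sum_(j < d.+1) f`_j *: (A ^+ j * B ^+ (d - j)).

Fixpoint G (i : nat) : {mpoly K[n.+1]} :=
  match i with
  | 0 => 'X_(inord 0)
  | i'.+1 => fh (G i') ('X_(inord i'.+1) ^+ (d ^ i'))
  end.

Definition hom (u v : Kbar) := \sum_(j < d.+1) iota f`_j * (u ^+ j * v ^+ (d - j)).

Definition E (x : 'I_n.+1 -> Kbar) (p : {mpoly K[n.+1]}) := (map_mpoly iota p).@[x].

Lemma E_fh x A B : E x (fh A B) = hom (E x A) (E x B).
Proof.
rewrite /E /fh /hom (rmorph_sum (map_mpoly iota)) raddf_sum; apply: eq_bigr => j _.
change ((map_mpoly iota (f`_j *: (A ^+ j * B ^+ (d - j)))).@[x] = iota f`_j * ((map_mpoly iota A).@[x] ^+ j * (map_mpoly iota B).@[x] ^+ (d - j))). rewrite -mul_mpolyC !rmorphM !rmorphXn; congr (_ * (_ * _)). change ((map_mpoly iota (f`_j)%:MP_[n.+1]).@[x] = iota f`_j). by rewrite map_mpolyC mevalC.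
Qed.

Lemma E_X x i : E x 'X_i = x i.
Proof. by rewrite /E map_mpolyX mevalXU. Qed.

Lemma E_exp x p k : E x (p ^+ k) = E x p ^+ k.
Proof. by rewrite /E !rmorphXn. Qed.

Lemma E_G x i : E x (G i.+1) = hom (E x (G i)) (x (inord i.+1) ^+ (d ^ i)).
Proof. by rewrite [G _.+1]/= E_fh E_exp E_X. Qed.


Let sf : size f = d.+1.
Proof. by rewrite /d prednK // size_poly_gt0. Qed.

Lemma hom_v0 u : hom u 0 = iota (lead_coef f) * u ^+ d.
Proof.
rewrite /hom big_ord_recr /= subnn expr0 mulr1 big1 ?add0r; first by rewrite lead_coefE.
move=> j _; rewrite expr0n subn_eq0 leqNgt ltn_ord /= !mulr0 //.
Qed.

Lemma hom_root u v : v != 0 -> hom u v = v ^+ d * (map_poly iota f).[u / v].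
Proof.
move=> v0; rewrite horner_coef size_map_poly sf mulr_sumr /hom; apply: eq_bigr => j _.
rewrite coef_map /=.
have jd : (j <= d)%N by rewrite -ltnS.
rewrite (_ : v ^+ d = v ^+ (d - j) * v ^+ j); last by rewrite -exprD subnK.
have vj : v ^+ j != 0 by rewrite expf_neq0.
rewrite expr_div_n; field.
done.
Qed.

Lemma hom_zero u v : hom u v = 0 ->
  (v = 0 /\ u = 0) \/ (v != 0 /\ root (map_poly iota f) (u / v)).
Proof.
have [->|v0] := eqVneq v 0.
  rewrite hom_v0 => /eqP; rewrite mulf_eq0 fmorph_eq0 lead_coef_eq0 (negPf f0) /=.
  by rewrite expf_eq0 => /andP [_ /eqP]; left.
rewrite hom_root // => /eqP; rewrite mulf_eq0 expf_eq0 (negPf v0) andbF /= => r.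
by right.
Qed.

Lemma hom_S (S : Kbar -> Prop) u v : is_ext iota S -> S u -> S v -> S (hom u v).
Proof.
move=> HS Su Sv; apply: (Ssum HS) => j; apply: (SM HS); first exact: (SK HS).
by apply: (SM HS); apply: (SX HS).
Qed.

Lemma E0 x : E x 0 = 0.
Proof. by rewrite /E !raddf0. Qed.

Lemma X_homog (i : 'I_n.+1) : ('X_i : {mpoly K[n.+1]}) \is 1.-homog.
Proof. by rewrite dhomogX; apply/eqP; apply: mdeg1. Qed.

Lemma G_homog i : G i \is (d ^ i).-homog.
Proof.
elim: i => [|i IH].
  rewrite expn0; exact: X_homog.
rewrite [G _.+1]/= /fh.
apply: (big_ind (fun p : {mpoly K[n.+1]} => p \is (d ^ i.+1).-homog)).
- exact: dhomog0.
- move=> p q hp hq. apply: dhomogD => //.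
move=> j _; apply: dhomogZ.
have jd : (j <= d)%N by rewrite -ltnS.
have -> : (d ^ i.+1 = d ^ i * j + d ^ i * (d - j))%N.
  by rewrite -mulnDr subnKC // expnSr.
apply: dhomogM; first exact: (dhomogMn j IH).
have hX : 'X_(inord i.+1) ^+ (d ^ i) \is (1 * d ^ i)%N.-homog := dhomogMn (d ^ i) (X_homog (inord i.+1)).
rewrite mul1n in hX.
exact: (dhomogMn (d - j) hX).
Qed.


Lemma dpos : (0 < d)%N.
Proof. by rewrite /d -ltnS prednK // ltnW. Qed.

Lemma E_G_in (S : Kbar -> Prop) x : is_ext iota S -> (forall i, S (x i)) ->
  forall i, S (E x (G i)).
Proof.
move=> HS Sx; elim=> [|i IH]; first by rewrite [G 0]/= E_X.
by rewrite E_G; apply: hom_S => //; exact: (SX HS).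
Qed.

Lemma zero_force (S : Kbar -> Prop) x : is_ext iota S -> (forall i, S (x i)) ->
  ~ (exists z, S z /\ root (map_poly iota f) z) ->
  forall i, (i <= n)%N -> E x (G i) = 0 -> forall j, (j <= i)%N -> x (inord j) = 0.
Proof.
move=> HS Sx nz; elim=> [|i IH] hi.
  by rewrite [G 0]/= E_X => h j; rewrite leqn0 => /eqP ->.
rewrite E_G => /hom_zero [[v0 u0]|[v0 r]].
  move=> j; rewrite leq_eqVlt ltnS => /orP [/eqP ->|ji].
    by move/eqP: v0; rewrite expf_eq0 => /andP [_ /eqP].
  exact: IH (ltnW hi) u0 j ji.
exfalso; apply: nz; exists (E x (G i) / x (inord i.+1) ^+ (d ^ i)); split => //.
apply: (SM HS); [exact: E_G_in | apply: (SV HS); apply: (SX HS)]; apply: Sx.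
Qed.

Lemma pos_point x a : root (map_poly iota f) a -> x (inord 0) = a -> x (inord 1) = 1 ->
  (forall j, (2 <= j <= n)%N -> x (inord j) = 0) ->
  forall i, (1 <= i <= n)%N -> E x (G i) = 0.
Proof.
move=> ra x0 x1 xz; elim=> [//|i IH] /andP [_ hi].
rewrite E_G.
case: i IH hi => [|i] IH hi.
  by rewrite [G 0]/= E_X x0 x1 expr1n hom_root ?oner_neq0 // divr1 (eqP ra) mulr0.
rewrite xz ?hi // IH ?(ltnW hi) // expr0n eqn0Ngt expn_gt0 dpos /=.
by rewrite hom_v0 expr0n eqn0Ngt dpos /= mulr0.
Qed.

Lemma G_nonzero x : x (inord 0) != 0 -> (forall j, (1 <= j <= n)%N -> x (inord j) = 0) ->
  forall i, (i <= n)%N -> E x (G i) != 0.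
Proof.
move=> x0 xz; elim=> [|i IH] hi; first by rewrite [G 0]/= E_X.
rewrite E_G xz ?hi // expr0n eqn0Ngt expn_gt0 dpos /= hom_v0.
by rewrite mulf_neq0 ?expf_neq0 ?IH ?(ltnW hi) // fmorph_eq0 lead_coef_eq0.
Qed.

End Forms.

Theorem proposition3p3
  (K : fieldType) (Kbar : closedFieldType) (iota : {rmorphism K -> Kbar})
  (Halg : is_algebraic_over iota)
  (l : Kbar -> Prop)
  (Hl_fin : is_finite_ext iota l)
  (Hl_normal : is_normal_ext iota l)
  (Hl_simple : is_simple_ext iota l) :
  forall N : nat, exists n : nat, (N <= n)%N /\
    exists F : {mpoly K[n.+1]}, is_hypersurface F /\ is_normic_form iota l F.
Proof.
move=> N.
have [a Ha] := Hl_simple.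
have [p0 [p0n0 rp0]] := Halg a.
have [f [f0 rf fmin]] := minpoly_ex (leqnn (size p0)) p0n0 rp0.
have fi := minpoly_irr f0 rf fmin.
have f1 : (1 < size f)%N by case: fi.
have la : l a by apply/Ha => S HS Sa.
have lpoly : forall y, l y -> polyval iota a y.
  move=> y /Ha ly; have [He Pa] := polyval_ext fi rf; exact: ly _ He Pa.
exists N.+1; split; first exact: leqnSn.
exists (G f N.+1 N.+1); split.
  split.
    apply/negP => /eqP F0.
    pose e0 := fun i : 'I_N.+2 => if nat_of_ord i == 0%N then 1 else 0 : Kbar.
    have h0 : e0 (inord 0) != 0 by rewrite /e0 inordK // oner_neq0.
    have h1 : forall j, (1 <= j <= N.+1)%N -> e0 (inord j) = 0.
      move=> j /andP [j1 jn]; rewrite /e0 inordK ?ltnS //.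
      by case: j j1 {jn}.
    have := G_nonzero iota f0 f1 h0 h1 (leqnn N.+1).
    by rewrite F0 E0 eqxx.
  exists ((size f).-1 ^ N.+1)%N; split; last exact: G_homog.
  by rewrite expn_gt0 (dpos f1).
move=> k' [Hk' _]; split.
  move=> [x [Hx [[i0 xi0] Fx]]].
  case: (Classical_Prop.classic (exists z, k' z /\ root (map_poly iota f) z)) => [[z [kz rz]]|nz].
    have lz : l z := Hl_normal f fi (ex_intro _ a (conj la rf)) z rz.
    have [q zE] := lpoly z lz.
    have ka : k' a := conj_gen fi rf rz zE Hk' kz.
    by move=> y /Ha ly; exact: ly _ Hk' ka.
  exfalso; move: xi0; apply/negP; rewrite negbK.
  have := zero_force f0 Hk' Hx nz (leqnn N.+1) Fx (j:= i0).
  by rewrite inord_val => -> //; rewrite -ltnS.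
move=> Hl.
have ka := Hl a la.
pose x := fun i : 'I_N.+2 => if nat_of_ord i == 0%N then a else if nat_of_ord i == 1%N then 1 else 0 : Kbar.
exists x; split.
  move=> i; rewrite /x; case: ifP => _; first done.
  by case: ifP => _; [exact: (S1 Hk') | exact: (S0 Hk')].
split.
  by exists (inord 1); rewrite /x inordK // oner_neq0.
apply: (pos_point f0 f1 (a:=a)) => //.
- by rewrite /x inordK.
- by rewrite /x inordK.
- move=> j /andP [j2 jn]; rewrite /x inordK ?ltnS //.
  by case: j j2 {jn} => [|[|j]].
- by rewrite leqnn.
Qed.
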